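(* Let $\mathcal{V}^{WF}$ be the set of well-formed views. The relation $\prec$ on views, restricted to $\mathcal{V}^{WF}$, is a causality relation, i.e. a strict partial order: (i) for all $v_1,v_2,v_3\in\mathcal{V}^{WF}$, if $v_1\prec v_2$ and $v_2\prec v_3$ then $v_1\prec v_3$; (ii) for all $v\in\mathcal{V}^{WF}$, $\neg(v\prec v)$; (iii) for all $v_1,v_2\in\mathcal{V}^{WF}$, if $v_1\prec v_2$ then $\neg(v_2\prec v_1)$.
   Context: A view is a record $v=(\mathrm{sp}(v),\mathrm{wp}(v),\mathrm{mode}(v))$ with $\mathrm{sp}(v),\mathrm{wp}(v)\in\mathbb{N}$ (the signal phase and wait phase) and $\mathrm{mode}(v)\in\{\mathtt{SW},\mathtt{SO},\mathtt{WO}\}$ (signal-wait, signal-only, wait-only). Write $\mathrm{CanSignal}(v)$ iff $\mathrm{mode}(v)\in\{\mathtt{SW},\mathtt{SO}\}$ and $\mathrm{CanWait}(v)$ iff $\mathrm{mode}(v)\in\{\mathtt{SW},\mathtt{WO}\}$. A view $v$ is well-formed if one of the following holds: (a) $\mathrm{CanWait}(v)$ and $\mathrm{wp}(v)=\mathrm{sp}(v)$; (b) $\mathrm{CanWait}(v)$ and $\mathrm{wp}(v)+1=\mathrm{sp}(v)$; (c) $\mathrm{mode}(v)=\mathtt{SO}$ and $\mathrm{wp}(v)\le\mathrm{sp}(v)$. The happens-before relation on views is defined by $v_1\prec v_2$ iff $\mathrm{CanSignal}(v_1)$, $\mathrm{sp}(v_1)<\mathrm{wp}(v_2)$, and $\mathrm{CanWait}(v_2)$.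 *)

(* Defs.v *)
From Stdlib Require Import Arith Lia.

Inductive mode : Type := SW | SO | WO.

Record view : Type := mkView { sp : nat; wp : nat; vmode : mode }.

Definition CanSignal (v : view) : Prop := vmode v = SW \/ vmode v = SO.
Definition CanWait (v : view) : Prop := vmode v = SW \/ vmode v = WO.

Definition well_formed (v : view) : Prop :=
  (CanWait v /\ wp v = sp v) \/
  (CanWait v /\ wp v + 1 = sp v) \/
  (vmode v = SO /\ wp v <= sp v).

Definition hb (v1 v2 : view) : Prop :=
  CanSignal v1 /\ sp v1 < wp v2 /\ CanWait v2.

(* Main.v *)
Require Import Defs.
From Stdlib Require Import Arith Lia.

Lemma wf_le v : well_formed v -> wp v <= sp v.
Proof. unfold well_formed; intros [[_ H]|[[_ H]|[_ H]]]; lia. Qed.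

Theorem lemma1 :
  (forall v1 v2 v3 : view, well_formed v1 -> well_formed v2 -> well_formed v3 ->
     hb v1 v2 -> hb v2 v3 -> hb v1 v3) /\
  (forall v : view, well_formed v -> ~ hb v v) /\
  (forall v1 v2 : view, well_formed v1 -> well_formed v2 ->
     hb v1 v2 -> ~ hb v2 v1).
Proof.
  unfold hb; split; [|split].
  - intros v1 v2 v3 W1 W2 W3 [A [B C]] [D [E F]].
    pose proof (wf_le _ W2). repeat split; auto; lia.
  - intros v W [_ [B _]]. pose proof (wf_le _ W). lia.
  - intros v1 v2 W1 W2 [_ [B _]] [_ [D _]].
    pose proof (wf_le _ W1); pose proof (wf_le _ W2). lia.
Qed.
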